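(* Let $R$ be a commutative ring in which $2$ is invertible, let $Q$ be a quadratic space over $R$, let $m\ge 1$ and $M=Q\perp\mathbb{H}(R)^m$. Then $\mathrm{EO}_R(Q,\mathbb{H}(R)^m)=\mathrm{ETransO}(M)$.
   Context: A quadratic $R$-module $(Q,q)$ is a finitely generated projective $R$-module with a quadratic form $q$; its bilinear form is $\langle x,y\rangle=q(x+y)-q(x)-q(y)$ (so $\langle x,x\rangle=2q(x)$). It is a quadratic space if $z\mapsto\langle z,-\rangle$ is an isomorphism $Q\to Q^*$. For a finitely generated projective $P$, $\mathbb{H}(P)=P\oplus P^*$ with $q(y,g)=g(y)$, i.e. $\langle(y_1,g_1),(y_2,g_2)\rangle=g_2(y_1)+g_1(y_2)$; orthogonal sums carry the sum of the forms. $\mathbb{H}(R)^m=\mathbb{H}(R^m)$ with basis $x_1,\dots,x_m$ of $R^m$ and dual basis $f_1,\dots,f_m$ ($f_i(x_j)=\delta_{ij}$). DSER transformations on $Q\perp\mathbb{H}(P)$: for $R$-linear $\alpha:Q\to P$, let $\alpha^*:P^*\to Q$ be determined by $\langle\alpha^*(g),z\rangle=g(\alpha(z))$ for all $z\in Q$, and $E_\alpha(z,y,g)=(z-\alpha^*(g),\,y+\alpha(z)-\tfrac12\alpha\alpha^*(g),\,g)$; for $R$-linear $\beta:Q\to P^*$, let $\beta^*:P\to Q$ be determined by $\langle\beta^*(y),z\rangle=\beta(z)(y)$, and $E^*_\beta(z,y,g)=(z-\beta^*(y),\,y,\,g+\beta(z)-\tfrac12\beta\beta^*(y))$. $\mathrm{EO}_R(Q,\mathbb{H}(P))$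 is generated by all $E_\alpha,E^*_\beta$. Elementary orthogonal transvections on $M=Q\perp\mathbb{H}(R)^m$: for $w\in Q$ and $1\le i\le m$, writing elements as $(z,\sum_j a_jx_j+\sum_j b_jf_j)$, set $E^w_{1i}(z,\sum a_jx_j+\sum b_jf_j)=(z-b_iw,\ \sum a_jx_j+(\langle z,w\rangle-b_iq(w))x_i+\sum b_jf_j)$ and $E^w_{2i}(z,\sum a_jx_j+\sum b_jf_j)=(z-a_iw,\ \sum a_jx_j+\sum b_jf_j+(\langle z,w\rangle-a_iq(w))f_i)$. $\mathrm{ETransO}(M)$ is the group generated by all $E^w_{1i},E^w_{2i}$ ($w\in Q$, $1\le i\le m$). *)

(* Defs.v *)
From HB Require Import structures.
From mathcomp Require Import all_boot all_order all_algebra.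
Set Implicit Arguments. Unset Strict Implicit. Unset Printing Implicit Defensive.
Import GRing.Theory.
Local Open Scope ring_scope.

Section Defs.
Variable R : comUnitRingType.

Definition is_linear (U V : lmodType R) (f : U -> V) : Prop :=
  forall (a : R) (x y : U), f (a *: x + y) = a *: f x + f y.

Definition is_lfun (U : lmodType R) (f : U -> R) : Prop :=
  forall (a : R) (x y : U), f (a *: x + y) = a * f x + f y.

(* finitely generated projective: a direct summand of some free module R^n *)
Definition fg_projective (U : lmodType R) : Prop :=
  exists (n : nat) (i : U -> 'rV[R]_n) (p : 'rV[R]_n -> U),
    is_linear i /\ is_linear p /\ cancel i p.

Variable Q : lmodType R.

Definition polar (q : Q -> R) (x y : Q) : R := q (x + y) - q x - q y.

Definition is_quadratic_form (q : Q -> R) : Prop :=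
  (forall (a : R) (x : Q), q (a *: x) = a ^+ 2 * q x) /\
  (forall y : Q, is_lfun (fun x => polar q x y)) /\
  (forall x : Q, is_lfun (fun y => polar q x y)).

(* quadratic space: Q f.g. projective, q quadratic form, and z |-> <z,-> is
   an isomorphism Q -> Q^* (injective and surjective onto linear functionals) *)
Definition quadratic_space (q : Q -> R) : Prop :=
  fg_projective Q /\ is_quadratic_form q /\
  (forall z : Q, (forall y : Q, polar q z y = 0) -> z = 0) /\
  (forall f : Q -> R, is_lfun f -> exists z : Q, forall y : Q, polar q z y = f y).

Variable m : nat.

(* M = Q _|_ H(R)^m, elements (z, (a, b)) standing for
   (z, sum_j a_j x_j + sum_j b_j f_j); P = R^m (row vectors, basis x_j),
   P^* identified with R^m via the dual basis f_j, so g(y) = sum_j g_j y_j. *)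
Definition MType := (Q * ('rV[R]_m * 'rV[R]_m))%type.

Definition pairing (g y : 'rV[R]_m) : R := \sum_(j < m) g 0 j * y 0 j.

Definition half : R := (2 : R)^-1.

(* DSER transformation E_alpha, where alphas is alpha^* *)
Definition E_alpha (alpha : Q -> 'rV[R]_m) (alphas : 'rV[R]_m -> Q) (v : MType)
  : MType :=
  let: (z, (y, g)) := v in
  (z - alphas g, (y + alpha z - half *: alpha (alphas g), g)).

(* DSER transformation E^*_beta, where betas is beta^* *)
Definition Es_beta (beta : Q -> 'rV[R]_m) (betas : 'rV[R]_m -> Q) (v : MType)
  : MType :=
  let: (z, (y, g)) := v in
  (z - betas y, (y, g + beta z - half *: beta (betas y))).

Definition EO_gen (q : Q -> R) (s : MType -> MType) : Prop :=
  (exists (alpha : Q -> 'rV[R]_m) (alphas : 'rV[R]_m -> Q),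
     is_linear alpha /\
     (forall g z, polar q (alphas g) z = pairing g (alpha z)) /\
     s = E_alpha alpha alphas) \/
  (exists (beta : Q -> 'rV[R]_m) (betas : 'rV[R]_m -> Q),
     is_linear beta /\
     (forall y z, polar q (betas y) z = pairing (beta z) y) /\
     s = Es_beta beta betas).

Definition unitv (i : 'I_m) : 'rV[R]_m := delta_mx 0 i.

Definition E1 (q : Q -> R) (w : Q) (i : 'I_m) (v : MType) : MType :=
  let: (z, (a, b)) := v in
  (z - b 0 i *: w, (a + (polar q z w - b 0 i * q w) *: unitv i, b)).

Definition E2 (q : Q -> R) (w : Q) (i : 'I_m) (v : MType) : MType :=
  let: (z, (a, b)) := v in
  (z - a 0 i *: w, (a, b + (polar q z w - a 0 i * q w) *: unitv i)).

Definition ETrans_gen (q : Q -> R) (s : MType -> MType) : Prop :=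
  exists (w : Q) (i : 'I_m), s = E1 q w i \/ s = E2 q w i.

End Defs.

(* the subgroup of the group of bijections of T generated by a set S of
   bijections, taken up to extensional equality of maps *)
Inductive gen_group (T : Type) (S : (T -> T) -> Prop) : (T -> T) -> Prop :=
| gen_one : forall f, f =1 id -> gen_group S f
| gen_mul : forall s g f, S s -> gen_group S g -> f =1 s \o g -> gen_group S f
| gen_inv : forall s s' g f, S s -> cancel s s' -> cancel s' s ->
    gen_group S g -> f =1 s' \o g -> gen_group S f.

(* Main.v *)
Require Import Defs.
From mathcomp Require Import all_boot all_order all_algebra.
From mathcomp Require Import ring.
Set Implicit Arguments. Unset Strict Implicit. Unset Printing Implicit Defensive.
Import GRing.Theory.
Local Open Scope ring_scope.

Section Group.
Variable T : Type.
Implicit Types S : (T -> T) -> Prop.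

Lemma gen_ext S f g : gen_group S f -> g =1 f -> gen_group S g.
Proof.
case=> [f0 H|s g0 f0 Hs Hg H|s s' g0 f0 Hs c1 c2 Hg H] E.
- apply: gen_one => x; by rewrite E H.
- apply: (gen_mul Hs Hg) => x; by rewrite E H.
- apply: (gen_inv Hs c1 c2 Hg) => x; by rewrite E H.
Qed.

Lemma gen_S S s : S s -> gen_group S s.
Proof. move=> Hs; apply: (gen_mul Hs (@gen_one T S id (frefl _))) => x //. Qed.

Lemma gen_comp S f h : gen_group S f -> gen_group S h -> gen_group S (f \o h).
Proof.
move=> Hf Hh; elim: Hf => [f0 E|s g f0 Hs Hg IH E|s s' g f0 Hs c1 c2 Hg IH E].
- apply: gen_ext Hh _ => x /=; by rewrite E.
- apply: (gen_mul Hs IH) => x /=; by rewrite E.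
- apply: (gen_inv Hs c1 c2 IH) => x /=; by rewrite E.
Qed.

Lemma gen_inverse S :
  (forall s, S s -> exists t, gen_group S t /\ cancel s t /\ cancel t s) ->
  forall f, gen_group S f -> exists f', gen_group S f' /\ cancel f f' /\ cancel f' f.
Proof.
move=> HS f; elim=> [f0 E|s g f0 Hs Hg [g' [Hg' [c1 c2]]] E|s s' g f0 Hs cs1 cs2 Hg [g' [Hg' [c1 c2]]] E].
- exists id; split; first by apply: gen_one.
  by split=> x /=; rewrite E.
- have [t [Ht [ct1 ct2]]] := HS s Hs.
  exists (g' \o t); split; first exact: gen_comp.
  split=> x /=; rewrite E /=; first by rewrite ct1 c1.
  by rewrite c2 ct2.
- exists (g' \o s); split; first by apply: gen_comp => //; apply: gen_S.
  split=> x /=; rewrite E /=; first by rewrite cs2 c1.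
  by rewrite c2 cs1.
Qed.

Lemma gen_inv_mem S :
  (forall s, S s -> exists t, gen_group S t /\ cancel s t /\ cancel t s) ->
  forall f f', gen_group S f -> cancel f' f -> gen_group S f'.
Proof.
move=> HS f f' Hf c; have [f'' [H [c1 c2]]] := gen_inverse HS Hf.
apply: gen_ext H _ => x; by rewrite -{2}(c x) c1.
Qed.

Lemma gen_mono S S' :
  (forall s, S s -> gen_group S' s) ->
  (forall s, S' s -> exists t, gen_group S' t /\ cancel s t /\ cancel t s) ->
  forall f, gen_group S f -> gen_group S' f.
Proof.
move=> HS HS' f; elim=> [f0 E|s g f0 Hs Hg IH E|s s' g f0 Hs c1 c2 Hg IH E].
- exact: gen_one.
- apply: gen_ext E; apply: gen_comp IH; exact: HS.
- apply: gen_ext E; apply: gen_comp IH.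
  apply: (gen_inv_mem HS' (HS _ Hs)); exact: c2.
Qed.

Lemma gen_mono' S S' :
  (forall s, S s -> exists s0, S' s0 /\ s0 =1 s) ->
  forall f, gen_group S f -> gen_group S' f.
Proof.
move=> HS f; elim=> [f0 E|s g f0 Hs Hg IH E|s s' g f0 Hs c1 c2 Hg IH E].
- exact: gen_one.
- have [s0 [H0 E0]] := HS s Hs.
  apply: (gen_mul H0 IH) => x; by rewrite E /= E0.
- have [s0 [H0 E0]] := HS s Hs.
  apply: (gen_inv H0 _ _ IH E) => x; by rewrite ?E0 ?c1 ?c2.
Qed.

Lemma gen_conj S S' (sg : T -> T) : involutive sg ->
  (forall s, S s -> exists s0, S' s0 /\ s0 =1 sg \o s \o sg) ->
  forall f, gen_group S f -> gen_group S' (sg \o f \o sg).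
Proof.
move=> Hsg HS f; elim=> [f0 E|s g f0 Hs Hg IH E|s s' g f0 Hs c1 c2 Hg IH E].
- apply: gen_one => x /=; by rewrite E Hsg.
- have [s0 [H0 E0]] := HS s Hs.
  apply: (gen_mul H0 IH) => x; by rewrite /= E /= E0 /= Hsg.
- have [s0 [H0 E0]] := HS s Hs.
  apply: (gen_inv (s' := sg \o s' \o sg) H0 _ _ IH) => x.
  + by rewrite E0 /= Hsg c1 Hsg.
  + by rewrite E0 /= Hsg c2 Hsg.
  + by rewrite /= E /= Hsg.
Qed.
End Group.
Section Lin.
Variable R : comUnitRingType.

Lemma lfun_0 (U : lmodType R) (f : U -> R) : is_lfun f -> f 0 = 0.
Proof.
move=> H; have := H 1 0 0; rewrite scale1r addr0 mul1r => E.
have : f 0 + f 0 - f 0 = f 0 - f 0 by rewrite -E.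
by rewrite addrK subrr.
Qed.
Lemma lfun_add (U : lmodType R) (f : U -> R) : is_lfun f -> forall x y, f (x + y) = f x + f y.
Proof. by move=> H x y; have := H 1 x y; rewrite scale1r mul1r. Qed.
Lemma lfun_scale (U : lmodType R) (f : U -> R) : is_lfun f -> forall a x, f (a *: x) = a * f x.
Proof. by move=> H a x; rewrite -[a *: x]addr0 H lfun_0 // addr0. Qed.
Lemma lfun_opp (U : lmodType R) (f : U -> R) : is_lfun f -> forall x, f (- x) = - f x.
Proof. by move=> H x; rewrite -scaleN1r lfun_scale // mulN1r. Qed.
Lemma lfun_sub (U : lmodType R) (f : U -> R) : is_lfun f -> forall x y, f (x - y) = f x - f y.
Proof. by move=> H x y; rewrite lfun_add // lfun_opp. Qed.
Lemma lfun_sum (U : lmodType R) (f : U -> R) n (c : 'I_n -> R) (v : 'I_n -> U) :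
  is_lfun f -> f (\sum_i c i *: v i) = \sum_i c i * f (v i).
Proof.
move=> H; rewrite (big_morph f (lfun_add H) (lfun_0 H)).
by apply: eq_bigr => i _; rewrite lfun_scale.
Qed.

Lemma lin_0 (U V : lmodType R) (f : U -> V) : is_linear f -> f 0 = 0.
Proof.
move=> H; have := H 1 0 0; rewrite scale1r addr0 scale1r => E.
have : f 0 + f 0 - f 0 = f 0 - f 0 by rewrite -E.
by rewrite addrK subrr.
Qed.
Lemma lin_add (U V : lmodType R) (f : U -> V) : is_linear f -> forall x y, f (x + y) = f x + f y.
Proof. by move=> H x y; have := H 1 x y; rewrite !scale1r. Qed.
Lemma lin_scale (U V : lmodType R) (f : U -> V) : is_linear f -> forall a x, f (a *: x) = a *: f x.
Proof. by move=> H a x; rewrite -[a *: x]addr0 H lin_0 // addr0. Qed.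
Lemma lin_opp (U V : lmodType R) (f : U -> V) : is_linear f -> forall x, f (- x) = - f x.
Proof. by move=> H x; rewrite -scaleN1r lin_scale // scaleN1r. Qed.
Lemma lin_sub (U V : lmodType R) (f : U -> V) : is_linear f -> forall x y, f (x - y) = f x - f y.
Proof. by move=> H x y; rewrite lin_add // lin_opp. Qed.
Lemma pairing_sym m (g y : 'rV[R]_m) : pairing g y = pairing y g.
Proof. by apply: eq_bigr => i _; rewrite mulrC. Qed.
End Lin.

Section Alg.
Variables (R : comUnitRingType) (Q : lmodType R) (q : Q -> R) (m : nat).
Hypothesis h2u : (2 : R) \is a GRing.unit.
Hypothesis hq : is_quadratic_form q.

Local Notation pol := (polar q).
Local Notation M := (MType Q m).
Local Notation hf := (Defs.half R).

Lemma halfK : hf * 2 = 1.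
Proof. by rewrite /Defs.half mulVr. Qed.
Lemma halfM2 x : hf * (2 * x) = x.
Proof. by rewrite mulrA halfK mul1r. Qed.

Lemma lfun1 y : is_lfun (fun x => pol x y). Proof. exact: hq.2.1. Qed.
Lemma lfun2 x : is_lfun (fun y => pol x y). Proof. exact: hq.2.2. Qed.

Lemma polar_sym x y : pol x y = pol y x.
Proof. rewrite /polar [y + x]addrC; ring. Qed.

Lemma polar_diag w : pol w w = 2 * q w.
Proof.
rewrite /polar -[w + w]/(w *+ 2) -scaler_nat hq.1; ring.
Qed.

Lemma pol0 z : pol 0 z = 0. Proof. exact: (lfun_0 (lfun1 z)). Qed.

Definition Ta (h : 'rV[R]_m -> 'rV[R]_m) (v : M) : M :=
  let: (z, (y, g)) := v in (z, (y + h g, g)).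

Definition Sfun (al be : Q -> 'rV[R]_m) (als bes : 'rV[R]_m -> Q) g :=
  hf *: (al (bes g) + be (als g)) - al (bes g).

Lemma E_comp al als be bes : is_linear al -> is_linear be ->
  forall v, E_alpha al als (E_alpha be bes v) =
    Ta (Sfun al be als bes) (E_alpha (fun z => al z + be z) (fun g => als g + bes g) v).
Proof.
move=> Ha Hb [z [y g]]; rewrite /E_alpha /Ta /Sfun /=.
congr (_, (_, _)); first by rewrite opprD addrA addrAC.
rewrite (lin_sub Ha) !(lin_add Ha) !(lin_add Hb).
apply/rowP => j; rewrite !mxE; ring.
Qed.

Lemma Ta_comp h1 h2 v : Ta h1 (Ta h2 v) = Ta (fun g => h1 g + h2 g) v.
Proof. by case: v => z [y g]; rewrite /Ta -addrA [h2 g + _]addrC. Qed.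

Lemma Ta_ext h1 h2 : h1 =1 h2 -> Ta h1 =1 Ta h2.
Proof. by move=> E [z [y g]]; rewrite /Ta E. Qed.

Lemma E_alpha_ext (al al' : Q -> 'rV[R]_m) als als' : al =1 al' -> als =1 als' ->
  E_alpha al als =1 E_alpha al' als'.
Proof. by move=> E1 E2 [z [y g]]; rewrite /E_alpha !E1 !E2. Qed.

Lemma E_alpha0 (al : Q -> 'rV[R]_m) als : al =1 (fun _ => 0) -> als =1 (fun _ => 0) ->
  E_alpha al als =1 id.
Proof. by move=> E1 E2 [z [y g]]; rewrite /E_alpha !E1 !E2 subr0 scaler0 !addr0 subr0. Qed.

Definition aF (F : 'I_m -> Q) (z : Q) : 'rV[R]_m := \row_i pol (F i) z.
Definition asF (F : 'I_m -> Q) (g : 'rV[R]_m) : Q := \sum_i g 0 i *: F i.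
Definition EF F := E_alpha (aF F) (asF F).

Lemma aF_lin F : is_linear (aF F).
Proof. by move=> a x y; apply/rowP => i; rewrite !mxE (lfun2 (F i)). Qed.

Lemma aF_add F H z : aF (fun i => F i + H i) z = aF F z + aF H z.
Proof. by apply/rowP => i; rewrite !mxE (lfun_add (lfun1 z)). Qed.
Lemma aF_scale c F z : aF (fun i => c *: F i) z = c *: aF F z.
Proof. by apply/rowP => i; rewrite !mxE (lfun_scale (lfun1 z)). Qed.
Lemma aF_opp F z : aF (fun i => - F i) z = - aF F z.
Proof. by apply/rowP => i; rewrite !mxE (lfun_opp (lfun1 z)). Qed.
Lemma asF_add F H g : asF (fun i => F i + H i) g = asF F g + asF H g.
Proof. by rewrite /asF -big_split; apply: eq_bigr => i _; rewrite scalerDr. Qed.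
Lemma asF_scale c F g : asF (fun i => c *: F i) g = c *: asF F g.
Proof. by rewrite /asF scaler_sumr; apply: eq_bigr => i _; rewrite !scalerA mulrC. Qed.
Lemma asF_opp F g : asF (fun i => - F i) g = - asF F g.
Proof. by rewrite /asF -sumrN; apply: eq_bigr => i _; rewrite scalerN. Qed.

Lemma EF_ext F H : F =1 H -> EF F =1 EF H.
Proof.
move=> E; apply: E_alpha_ext => x.
  by apply/rowP => i; rewrite !mxE E.
by apply: eq_bigr => i _; rewrite E.
Qed.

Lemma asF_adj F g z : pol (asF F g) z = pairing g (aF F z).
Proof.
rewrite /asF (lfun_sum _ _ (lfun1 z)) /pairing.
by apply: eq_bigr => i _; rewrite mxE.
Qed.

Lemma EF_opp F : cancel (EF (fun i => - F i)) (EF F).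
Proof.
move=> v; rewrite /EF (E_comp _ _ (aF_lin _) (aF_lin _)).
rewrite (E_alpha0 (al := fun z => aF F z + aF (fun i => - F i) z)
   (als := fun g => asF F g + asF (fun i => - F i) g)); first last.
- by move=> g /=; rewrite asF_opp subrr.
- by move=> z /=; rewrite aF_opp subrr.
case: v => z [y g] /=; rewrite /Sfun /= asF_opp !aF_opp (lin_opp (aF_lin F)).
congr (_, (_, _)); apply/rowP => j; rewrite !mxE.
set c := pol (F j) (asF F g).
have -> : - c - c = - (2 * c) by ring.
rewrite mulrN halfM2; ring.
Qed.

Definition dlt (w : Q) (i0 : 'I_m) := fun j : 'I_m => if j == i0 then w else 0.

Lemma asF_dlt w i0 g : asF (dlt w i0) g = g 0 i0 *: w.
Proof.
rewrite /asF (bigD1 i0) //= /dlt eqxx big1 ?addr0 // => j /negbTE ->.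
by rewrite scaler0.
Qed.

Lemma E1_EF w i0 : E1 q w i0 =1 EF (dlt w i0).
Proof.
case=> z [a b]; rewrite /E1 /EF /E_alpha asF_dlt.
congr (_, (_, _)); apply/rowP => j; rewrite !mxE.
have [->|ne] := eqVneq j i0.
  rewrite /dlt !eqxx /= (lfun_scale (lfun2 w)) polar_diag polar_sym.
  rewrite [b 0 i0 * (2 * _)]mulrCA halfM2; ring.
rewrite /dlt (negbTE ne) ?(eq_sym i0) ?(negbTE ne) /= !pol0; ring.
Qed.


Lemma half_lem (a b : R) : hf * (a + b) - a = hf * b - hf * a.
Proof. rewrite -{2}[a]mul1r -halfK; ring. Qed.
Lemma half_lemV (a b : 'rV[R]_m) : hf *: (a + b) - a = hf *: b - hf *: a.
Proof. by apply/rowP => j; rewrite !mxE half_lem. Qed.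

Definition S1 (s : M -> M) := exists w i, s = E1 q w i.

Lemma E1_cancel w (i : 'I_m) : cancel (E1 q w i) (E1 q (-w) i).
Proof.
move=> v; rewrite E1_EF E1_EF.
rewrite (EF_ext (F := dlt (-w) i) (H := fun j => - dlt w i j)); last first.
  by move=> j; rewrite /dlt; case: (j == i); rewrite ?oppr0.
rewrite -(EF_ext (F := fun j => - - dlt w i j) (H := dlt w i)) ?EF_opp //.
by move=> j; rewrite opprK.
Qed.
Lemma E1_cancel' w (i : 'I_m) : cancel (E1 q (-w) i) (E1 q w i).
Proof. by have := E1_cancel (-w) i; rewrite opprK. Qed.

Lemma S1inv s : S1 s -> exists t, gen_group S1 t /\ cancel s t /\ cancel t s.
Proof.
case=> w [i ->]; exists (E1 q (-w) i); split.
  by apply: gen_S; exists (-w), i.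
by split; [apply: E1_cancel | apply: E1_cancel'].
Qed.

Definition Dfun F H g := aF H (asF F g) - aF F (asF H g).

Lemma T_mem F H : gen_group S1 (EF F) -> gen_group S1 (EF H) ->
  gen_group S1 (Ta (Dfun F H)).
Proof.
move=> HF HH.
have HX := gen_comp HH HF.
have [X' [HX' [c1 c2]]] := gen_inverse S1inv HX.
apply: (gen_ext (f := (EF F \o EF H) \o X')).
  by apply: gen_comp => //; apply: gen_comp.
have key : forall v, Ta (Dfun F H) (EF H (EF F v)) = EF F (EF H v).
  move=> v; rewrite /EF !(E_comp _ _ (aF_lin _) (aF_lin _)) Ta_comp.
  rewrite (E_alpha_ext (al := fun z => aF H z + aF F z)
    (al' := fun z => aF F z + aF H z)
    (als := fun g => asF H g + asF F g)
    (als' := fun g => asF F g + asF H g)); first last.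
  - by move=> g; rewrite addrC.
  - by move=> z; rewrite addrC.
  apply: Ta_ext => g; rewrite /Dfun /Sfun; apply/rowP => j; rewrite !mxE; ring.
move=> u /=; by rewrite -{1}(c2 u) /= key.
Qed.

Lemma EF_mem k : forall F, (forall i : 'I_m, (k <= i)%N -> F i = 0) ->
  gen_group S1 (EF F).
Proof.
elim: k => [|k IH] F HF.
  apply: gen_one; apply: E_alpha0 => x.
    by apply/rowP => i; rewrite !mxE HF // pol0.
  by apply: big1 => i _; rewrite HF // scaler0.
case: (ltnP k m) => Hk; last first.
  apply: IH => i Hi; apply: HF.
  have := leq_trans (ltn_ord i) (leq_trans Hk Hi); by rewrite ltnn.
set i0 := Ordinal Hk.
set F' := fun i => if i == i0 then 0 else F i.
have HF' : forall i : 'I_m, (k <= i)%N -> F' i = 0.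
  move=> i Hi; rewrite /F'; case: eqP => // /eqP ne; apply: HF.
  rewrite ltn_neqAle Hi andbT; apply: contra ne => /eqP e; apply/eqP.
  by apply: val_inj => /=; rewrite -e.
have hsplit : forall i, F' i + dlt (F i0) i0 i = F i.
  by move=> i; rewrite /F' /dlt; case: eqP => [->|_]; rewrite ?add0r ?addr0.
have Hhalf : gen_group S1 (EF (fun i => hf *: F' i)).
  by apply: IH => i Hi; rewrite HF' // scaler0.
have Hdlt : gen_group S1 (EF (dlt (F i0) i0)).
  apply: (gen_ext (f := E1 q (F i0) i0)); first by apply: gen_S; exists (F i0), i0.
  by move=> v; rewrite E1_EF.
have HT := T_mem Hhalf Hdlt.
have [Ti [HTi [c1 c2]]] := gen_inverse S1inv HT.
apply: (gen_ext (f := Ti \o (EF F' \o EF (dlt (F i0) i0)))).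
  by apply: gen_comp => //; apply: gen_comp => //; apply: IH.
move=> v /=.
have key : EF F' (EF (dlt (F i0) i0) v) =
    Ta (Dfun (fun i => hf *: F' i) (dlt (F i0) i0)) (EF F v).
  rewrite /EF (E_comp _ _ (aF_lin _) (aF_lin _)).
  rewrite (E_alpha_ext (al := fun z => aF F' z + aF (dlt (F i0) i0) z) (al' := aF F)
     (als := fun g => asF F' g + asF (dlt (F i0) i0) g) (als' := asF F)); first last.
  - by move=> g; rewrite -asF_add /asF; apply: eq_bigr => i _; rewrite hsplit.
  - by move=> z; rewrite -aF_add; apply/rowP => i; rewrite !mxE hsplit.
  apply: Ta_ext => g; rewrite /Dfun /Sfun asF_scale aF_scale (lin_scale (aF_lin _)).
  by rewrite half_lemV.
by rewrite key c1.
Qed.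

Lemma EF_all F : gen_group S1 (EF F).
Proof.
apply: (EF_mem (k := m)) => i Hi.
by have := leq_trans (ltn_ord i) Hi; rewrite ltnn.
Qed.

Hypothesis hnd : forall z : Q, (forall y : Q, polar q z y = 0) -> z = 0.
Hypothesis hsurj : forall f : Q -> R, is_lfun f -> exists z : Q, forall y : Q, polar q z y = f y.

Lemma EO_alpha al als : is_linear al -> (forall g z, pol (als g) z = pairing g (al z)) ->
  gen_group S1 (E_alpha al als).
Proof.
move=> Hl Hadj.
have : forall i : 'I_m, exists w : Q, forall y, pol w y = al y 0 i.
  by move=> i; apply: hsurj => a x y; rewrite /= Hl !mxE.
case/fin_all_exists => F HF.
have Ea : aF F =1 al by move=> x; apply/rowP => i; rewrite mxE HF.
apply: (gen_ext (EF_all F)); apply: E_alpha_ext => x //.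
apply/eqP; rewrite -subr_eq0; apply/eqP; apply: hnd => y.
by rewrite (lfun_sub (lfun1 y)) Hadj asF_adj Ea subrr.
Qed.

End Alg.

Theorem mainTheorem2 (R : comUnitRingType) (Q : lmodType R) (q : Q -> R)
  (m : nat) :
  (2 : R) \is a GRing.unit ->
  quadratic_space q ->
  (0 < m)%N ->
  forall f : MType Q m -> MType Q m,
    gen_group (EO_gen q) f <-> gen_group (ETrans_gen q) f.
Proof.
move=> h2 [_ [hq [hnd hsurj]]] _ f.
pose sg := fun v : MType Q m => let: (z, (y, g)) := v in (z, (g, y)).
have sgK : involutive sg by case=> z [y g].
have E2c : forall w i, E2 q w i =1 sg \o E1 q w i \o sg by move=> w i [z [y g]].
have Esc : forall be bes, Es_beta be bes =1 sg \o E_alpha be bes \o sg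
  by move=> be bes [z [y g]].
have S1T : forall g, gen_group (@S1 _ _ q m) g -> gen_group (ETrans_gen q) g.
  apply: gen_mono' => s [w [i ->]]; exists (E1 q w i); split => //.
  by exists w, i; left.
have S1T2 : forall g, gen_group (@S1 _ _ q m) g -> gen_group (ETrans_gen q) (sg \o g \o sg).
  apply: gen_conj => // s [w [i ->]]; exists (E2 q w i); split => //.
  by exists w, i; right.
have HT : forall s : MType Q m -> MType Q m, ETrans_gen q s ->
    exists t, gen_group (ETrans_gen q) t /\ cancel s t /\ cancel t s.
  move=> s [w [i [Es|Es]]]; subst s.
    exists (E1 q (-w) i); split; first by apply: gen_S; exists (-w), i; left.
    by split; [apply: (E1_cancel h2 hq) | apply: (E1_cancel' h2 hq)].
  exists (E2 q (-w) i); split; first by apply: gen_S; exists (-w), i; right.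
  split=> v; rewrite !E2c /= sgK ?(E1_cancel h2 hq) ?(E1_cancel' h2 hq) ?sgK //.
split.
- apply: (gen_mono _ HT) => s [[al [als [Hl [Hadj ->]]]] | [be [bes [Hl [Hadj ->]]]]].
    by apply: S1T; apply: (EO_alpha h2 hq hnd hsurj).
  apply: gen_ext (S1T2 _ (EO_alpha h2 hq hnd hsurj Hl _)) (Esc be bes) => //.
  by move=> g z; rewrite Hadj pairing_sym.
- apply: gen_mono' => s [w [i [->|->]]].
    exists (E_alpha (aF q (dlt w i)) (asF (dlt w i))); split.
      by left; exists (aF q (dlt w i)), (asF (dlt w i)); split; [apply: (aF_lin hq) | split; [apply: (asF_adj hq)|]].
    by move=> v; rewrite (E1_EF h2 hq).
  exists (Es_beta (aF q (dlt w i)) (asF (dlt w i))); split.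
    right; exists (aF q (dlt w i)), (asF (dlt w i)); split; first by apply: (aF_lin hq).
    by split => // y z; rewrite (asF_adj hq) pairing_sym.
  by move=> v; rewrite Esc E2c /= E1_EF.
Qed.
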